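(* Let $p$ be a prime and $\theta=\sum_{i=j}^\infty a_iX^{-i}\in\mathbb{F}_p((X^{-1}))$, with the convention $a_1=\dots=a_{j-1}=0$ if $j>1$. Let $I$ be the $\mathbb{N}\times\mathbb{N}_0$ unit matrix over $\mathbb{F}_p$ (rows indexed by $1,2,\dots$, columns by $0,1,\dots$, with entry $1$ in row $k$ and column $k-1$ and $0$ elsewhere) and let $H(\theta)$ be the $\mathbb{N}\times\mathbb{N}_0$ Hankel matrix whose entry in row $k\geq1$ and column $l\geq0$ is $a_{k+l}$. Then the van der Corput--Kronecker-type sequence $\big((\varphi_p(n),\langle \theta n(X)\rangle|_p)\big)_{n\geq 0}$ coincides with the two-dimensional digital sequence over $\mathbb{F}_p$ generated by the matrices $C_1=I$ and $C_2=H(\theta)$.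
   Context: $\mathbb{F}_p((X^{-1}))$ is the field of formal Laurent series $\sum_{i=j}^\infty a_iX^{-i}$ over $\mathbb{F}_p$, and $\langle\sum_{i=j}^\infty a_iX^{-i}\rangle=\sum_{i\ge\max\{1,j\}}a_iX^{-i}$ is its fractional part. $\mathbb{F}_p$ is identified with $\{0,1,\dots,p-1\}$. For $n\in\mathbb{N}_0$ with base-$p$ expansion $n=n_0+n_1p+\cdots$, $n(X)=n_0+n_1X+\cdots$ and $\varphi_p(n)=\sum_{i\ge0}n_ip^{-i-1}$. For $\sum_{i\ge1}b_iX^{-i}$ over $\mathbb{F}_p$, $|_p$ means substituting $X=p$, giving $\sum_{i\ge1}b_ip^{-i}\in[0,1)$. Digital sequence: given $\mathbb{N}\times\mathbb{N}_0$ matrices $C_1,C_2$ over $\mathbb{F}_p$, for $n\ge0$ set $\vec n=(n_0,n_1,\dots,n_r,0,0,\dots)^T$ from the base-$p$ digits of $n$, compute $C_i\vec n=(y^{(i)}_1,y^{(i)}_2,\dots)^T$ modulo $p$, and set $x^{(i)}_n=\sum_{k\ge1}y^{(i)}_kp^{-k}$; the sequence is $((x_n^{(1)},x_n^{(2)}))_{n\ge0}$. *)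

(* Defs.v *)
From HB Require Import structures.
From mathcomp Require Import all_boot all_order all_algebra.
From mathcomp Require Import all_classical all_reals all_analysis.
Set Implicit Arguments. Unset Strict Implicit. Unset Printing Implicit Defensive.
Import Order.TTheory GRing.Theory Num.Theory.
Local Open Scope ring_scope.

Definition rsum (R : realType) (u : nat -> R) : R :=
  limn (fun N => \sum_(i < N) u i).

Definition digit (p n k : nat) : nat := (n %/ p ^ k %% p)%N.

Definition fp_val (p : nat) (x : 'F_p) : nat := nat_of_ord x.
Definition fdigit (p n k : nat) : 'F_p := (digit p n k)%:R.

Definition phi (R : realType) (p n : nat) : R :=
  rsum (fun i => (digit p n i)%:R / (p%:R) ^+ i.+1).

(* Laurent series in F_p((X^{-1})) are represented by their coefficient
   functions c : int -> F_p, c i being the coefficient of X^{-i}; such a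
   series has some lower bound v with c i = 0 for i < v. *)
Definition laurent_lb (p : nat) (c : int -> 'F_p) (v : int) : Prop :=
  forall i : int, (i < v)%R -> c i = 0.

(* Product of two Laurent series a, b with lower bounds va, vb:
   coefficient of X^{-m} is sum_{i+k=m} a_i b_k, i >= va, k >= vb. *)
Definition lmul (p : nat) (va vb : int) (a b : int -> 'F_p) : int -> 'F_p :=
  fun m => if (va + vb <= m)%R then
     \sum_(t < (absz (m - va - vb)%R).+1) a (va + t%:Z)%R * b (m - va - t%:Z)%R
   else 0.

(* n(X) = n_0 + n_1 X + ... as a Laurent series: coefficient of X^{-i}
   is n_{-i} for i <= 0, and 0 for i > 0.  Lower bound: -n. *)
Definition nX (p n : nat) : int -> 'F_p :=
  fun i => if (i <= 0)%R then fdigit p n (absz i) else 0.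

(* <b>|_p = sum_{i>=1} b_i p^{-i} (fractional part then X := p). *)
Definition frac_eval (R : realType) (p : nat) (b : int -> 'F_p) : R :=
  rsum (fun i => (fp_val (b (i.+1)%:Z))%:R / (p%:R) ^+ i.+1).

(* N x N_0 matrices over F_p: C k l, rows k >= 1 (row 0 is unused),
   columns l >= 0. *)
Definition mat (p : nat) := nat -> nat -> 'F_p.

(* y_k = (C n_vec)_k ; digits n_l vanish for l > n, so the sum is finite. *)
Definition mat_apply (p : nat) (C : mat p) (n k : nat) : 'F_p :=
  \sum_(l < n.+1) C k l * fdigit p n l.

Definition digital_coord (R : realType) (p : nat) (C : mat p) (n : nat) : R :=
  rsum (fun i => (fp_val (mat_apply C n i.+1))%:R / (p%:R) ^+ i.+1).

Definition unit_mat (p : nat) : mat p := fun k l => if k == l.+1 then 1 else 0.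

Definition hankel (p : nat) (a : int -> 'F_p) : mat p :=
  fun k l => a (k + l)%:Z.

(* Main.v *)
Require Import Defs.
From HB Require Import structures.
From mathcomp Require Import all_boot all_order all_algebra.
From mathcomp Require Import all_classical all_reals all_analysis.
From mathcomp Require Import zify.
Import Order.TTheory GRing.Theory Num.Theory.
Local Open Scope ring_scope.

Lemma sum_if_eq (p : nat) N (k : nat) (c : nat -> 'F_p) :
  \sum_(l < N) (if (l : nat) == k then c (l : nat) else 0)
  = if (k < N)%N then c k else 0.
Proof.
elim: N => [|N IH]; first by rewrite big_ord0.
rewrite big_ord_recr /= IH.
case: (ltngtP k N) => H.
- by rewrite (ltn_trans H (ltnSn N)) addr0.
- by rewrite ltnNge H addr0.
- by rewrite H ltnSn add0r.
Qed.

Lemma digit_big p n l : prime p -> (n < l)%N -> digit p n l = 0%N.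
Proof.
move=> pp nl; rewrite /digit divn_small; first exact: mod0n.
apply: (leq_trans (ltn_expl n (prime_gt1 pp))).
rewrite leq_exp2l; [exact: ltnW | exact: prime_gt1].
Qed.

Lemma fp_val_fdigit p n k : prime p -> fp_val (fdigit p n k) = digit p n k.
Proof.
move=> pp; rewrite /fp_val /fdigit val_Fp_nat // /digit modn_mod //.
Qed.

Lemma fdigit_big p n l : prime p -> (n < l)%N -> fdigit p n l = 0.
Proof. by move=> pp nl; rewrite /fdigit digit_big. Qed.

Theorem lemma1 (R : realType) (p : nat) (a : int -> 'F_p) (j : int) :
  prime p ->
  laurent_lb a j ->
  forall n : nat,
    (phi R p n, frac_eval R (lmul j (- (n%:Z)) a (nX p n)))
    = (digital_coord R (@unit_mat p) n, digital_coord R (hankel a) n).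
Proof.
move=> pp alb n; congr pair.
  rewrite /phi /digital_coord; congr rsum; apply: funext => i.
  congr (_%:R / _); rewrite /mat_apply.
  under eq_bigr => l _ do rewrite /unit_mat eqSS eq_sym (fun_if (fun x => x * _)) mul1r mul0r.
  rewrite (@sum_if_eq p _ _ (fun l => fdigit p n l)) -(@fp_val_fdigit p n i pp).
  case: ifP => // H; rewrite fdigit_big //; lia.
rewrite /frac_eval /digital_coord; congr rsum; apply: funext => i.
congr (_%:R / _); congr fp_val; rewrite /mat_apply /hankel /lmul.
set g := fun l : nat => a (i.+1 + l)%N%:Z * fdigit p n l.
have gE : \sum_(l < n.+1) a (i.+1 + l)%N%:Z * fdigit p n l = \sum_(l < n.+1) g l by [].
rewrite gE; clear gE.
set K : int := (i.+1%:Z - j)%R.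
case: ifP => Hm; last first.
  symmetry; apply: big1 => l _; rewrite /g alb ?mul0r //.
  move/negbT: Hm; rewrite -ltNge => Hm.
  have := ltn_ord l; lia.
set N := absz _.
have NE : N%:Z = K + n%:Z by rewrite /N /K; lia.
have step : forall t : 'I_N.+1,
  a (j + (t : nat)%:Z) * nX p n (K - (t : nat)%:Z)
  = \sum_(l < n.+1) (if (l : nat) == absz ((t : nat)%:Z - K) then
                        (if (K <= (t : nat)%:Z) then g l else 0) else 0).
  move=> t.
  rewrite (@sum_if_eq p _ _ (fun l => if (K <= (t : nat)%:Z) then g l else 0)).
  rewrite /nX -/K.
  case: ifP => H1; case: ifP => H2; try case: ifP => H3; try (exfalso; lia);
    rewrite ?mulr0 //.
  - rewrite /g; congr (a _ * fdigit p n _); lia.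
  - rewrite fdigit_big ?mulr0 //; lia.
under eq_bigr => t _ do rewrite step.
rewrite exchange_big /=; apply: eq_bigr => l _.
transitivity (\sum_(t < N.+1) (if (t : nat) == absz (K + (l : nat)%:Z) then
        (if (0 <= K + (l : nat)%:Z) then g l else 0) else 0)).
  apply: eq_bigr => t _.
  case: (eqVneq (t : nat) (absz (K + (l : nat)%:Z))) => H1;
    case: (eqVneq (l : nat) (absz ((t : nat)%:Z - K))) => H2;
    try case: ifP => H3; try case: ifP => H4; rewrite ?H1 ?H2 //; exfalso; lia.
have E := @sum_if_eq p N.+1 (absz (K + (l : nat)%:Z)) (fun _ => if (0 <= K + (l : nat)%:Z) then g l else 0).
rewrite /= in E; rewrite E.
case: ifP => H1; [case: ifP => H2 // |];
  rewrite /g alb ?mul0r //; have := ltn_ord l; lia.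
Qed.
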